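(* Let $a,b,q$ be complex numbers with $q\ne0$, and define $B_{n,k}(a,b)$ ($n\ge k\ge0$) by $$z^k=\sum_{n=k}^\infty B_{n,k}(a,b)\,z^n\frac{(az;q)_n}{(bz;q)_n}\qquad(k\ge0)$$ in $\mathbb{C}[[z]]$. Put $G_k(z):=\sum_{n=k}^\infty B_{n,k}(a,b)z^n$ and $G(y,z):=\sum_{k=0}^\infty G_k(z)y^k$. Then, as formal power series in $z$ (with coefficients rational functions of $y$), $$G(y,z)=\sum_{n=0}^\infty\frac{(b/y;q)_n}{(a/y;q)_n}(yz)^n+\sum_{n=0}^\infty\big(bzq^n-aG_1(zq^n)\big)\frac{(b/y;q)_n}{(a/y;q)_{n+1}}(yz)^n.$$
   Context: $(x;q)_n=\prod_{j=0}^{n-1}(1-xq^j)$ for $n\ge0$, $(x;q)_0=1$. The family $\{z^n(az;q)_n/(bz;q)_n\}_{n\ge0}$ is a basis of $\mathbb{C}[[z]]$ in the formal sense, so the $B_{n,k}(a,b)$ are uniquely determined. *)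

(* Defs.v *)
From HB Require Import structures.
From mathcomp Require Import all_boot all_order all_algebra.
From mathcomp Require Import fraction complex reals.
Set Implicit Arguments. Unset Strict Implicit. Unset Printing Implicit Defensive.
Import Order.TTheory GRing.Theory Num.Theory.
Local Open Scope ring_scope.

Definition qpoch (R : pzRingType) (x q : R) (n : nat) : R :=
  \prod_(j < n) (1 - x * q ^+ j).

Notation fps K := (nat -> K).

Section FPS.
Variable K : comNzRingType.
Definition fps0 : fps K := fun _ => 0.
Definition fps_poly (p : {poly K}) : fps K := fun m => p`_m.
Definition fps_monom (n : nat) (c : K) : fps K := fun m => if m == n then c else 0.
Definition fps_add (f g : fps K) : fps K := fun m => f m + g m.
Definition fps_sub (f g : fps K) : fps K := fun m => f m - g m.
Definition fps_scale (c : K) (f : fps K) : fps K := fun m => c * f m.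
Definition fps_mul (f g : fps K) : fps K :=
  fun m => \sum_(i < m.+1) f i * g (m - i)%N.
Definition fps_dil (c : K) (f : fps K) : fps K := fun m => c ^+ m * f m.
(* sum of a family F with F n of z-adic valuation >= n (the only kind of
   infinite sum used here); the coefficient of z^m is then the finite sum
   over n <= m *)
Definition fps_vsum (F : nat -> fps K) : fps K :=
  fun m => \sum_(n < m.+1) F n m.
End FPS.

Definition fps_map (K L : Type) (phi : K -> L) (f : fps K) : fps L :=
  fun m => phi (f m).

Section FPSInv.
Variable K : fieldType.
Fixpoint inv_seq (f : fps K) (m : nat) : seq K :=
  match m with
  | 0 => [:: (f 0%N)^-1]
  | m'.+1 => let s := inv_seq f m' in
      rcons s (- (f 0%N)^-1 * \sum_(1 <= i < m'.+2) f i * nth 0 s (m'.+1 - i))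
  end.
Definition fps_inv (f : fps K) : fps K := fun m => nth 0 (inv_seq f m) m.
End FPSInv.

Section Objects.
Variable C : fieldType.

Definition B_expansion (a b q : C) (B : nat -> nat -> C) : Prop :=
  forall k : nat,
    fps_poly ('X^k : {poly C}) =
    fps_vsum (fun n => if (k <= n)%N then
       fps_scale (B n k)
         (fps_mul (fps_poly ('X^n * qpoch (a *: 'X) q%:P n))
                  (fps_inv (fps_poly (qpoch (b *: 'X) q%:P n))))
       else fps0 C).

Definition Gk (B : nat -> nat -> C) (k : nat) : fps C :=
  fun m => if (k <= m)%N then B m k else 0.

Notation KC := {fraction {poly C}}.
Definition cst (c : C) : KC := tofrac (c%:P).
Definition yv : KC := tofrac ('X : {poly C}).

Definition Gyz (B : nat -> nat -> C) : fps KC :=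
  fps_vsum (fun k => fps_map (fun c => cst c * yv ^+ k) (Gk B k)).

Definition G_rhs (a b q : C) (B : nat -> nat -> C) : fps KC :=
  fps_add
    (fps_vsum (fun n => fps_monom n
        (qpoch (cst b / yv) (cst q) n / qpoch (cst a / yv) (cst q) n * yv ^+ n)))
    (fps_vsum (fun n => fps_mul
        (fps_sub (fps_monom 1 (cst b * cst q ^+ n))
                 (fps_scale (cst a) (fps_map cst (fps_dil (q ^+ n) (Gk B 1)))))
        (fps_monom n
           (qpoch (cst b / yv) (cst q) n / qpoch (cst a / yv) (cst q) n.+1
            * yv ^+ n)))).
End Objects.

(* Main.v *)
Require Import Defs.
From HB Require Import structures.
From mathcomp Require Import all_boot all_order all_algebra.
From mathcomp Require Import fraction complex reals.
From mathcomp Require Import zify ring.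
Set Implicit Arguments. Unset Strict Implicit. Unset Printing Implicit Defensive.
Import Order.TTheory GRing.Theory Num.Theory.
Local Open Scope ring_scope.
Unset Implicit Arguments.
Section PEQ.
Context {C : fieldType}.
Implicit Types p r : {poly C}.

Definition peq N p r := forall i, (i < N)%N -> p`_i = r`_i.

Lemma peq_refl N p : peq N p p. Proof. by []. Qed.
Lemma peq_sym N p r : peq N p r -> peq N r p. Proof. by move=> H i Hi; rewrite H. Qed.
Lemma peq_trans N p r s : peq N p r -> peq N r s -> peq N p s.
Proof. by move=> H1 H2 i Hi; rewrite H1 // H2. Qed.
Lemma peqD N p p' r r' : peq N p p' -> peq N r r' -> peq N (p + r) (p' + r').
Proof. by move=> H1 H2 i Hi; rewrite !coefD H1 // H2. Qed.
Lemma peqB N p p' r r' : peq N p p' -> peq N r r' -> peq N (p - r) (p' - r').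
Proof. by move=> H1 H2 i Hi; rewrite !coefB H1 // H2. Qed.
Lemma peqM N p p' r r' : peq N p p' -> peq N r r' -> peq N (p * r) (p' * r').
Proof.
move=> H1 H2 i Hi; rewrite !coefM; apply: eq_bigr => j _.
have := ltn_ord j => Hj.
rewrite H1 ?H2 //; lia.
Qed.
Lemma peqZ N c p p' : peq N p p' -> peq N (c *: p) (c *: p').
Proof. by move=> H i Hi; rewrite !coefZ H. Qed.
Lemma peq_sum N n (F G : 'I_n -> {poly C}) :
  (forall i, peq N (F i) (G i)) ->
  peq N (\sum_(i < n) F i) (\sum_(i < n) G i).
Proof.
move=> H j Hj; rewrite !coef_sum; apply: eq_bigr => i _; exact: H.
Qed.
Lemma peq_le N M p r : (M <= N)%N -> peq N p r -> peq M p r.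
Proof. move=> HM H i Hi; apply: H; lia. Qed.

Definition T N (f : fps C) : {poly C} := \poly_(i < N) f i.
Lemma coefT N f i : (T N f)`_i = if (i < N)%N then f i else 0.
Proof. exact: coef_poly. Qed.

Lemma T_mul N f g : peq N (T N (fps_mul f g)) (T N f * T N g).
Proof.
move=> i Hi; rewrite coefT Hi coefM /fps_mul; apply: eq_bigr => j _.
have := ltn_ord j => Hj.
rewrite !coefT ifT; last lia. rewrite ifT //; lia.
Qed.

Lemma T_poly N p : peq N (T N (fps_poly p)) p.
Proof. by move=> i Hi; rewrite coefT Hi. Qed.

Lemma peq_cancel N (D : {poly C}) p r : D`_0 = 1 -> peq N (D * p) (D * r) -> peq N p r.
Proof.
move=> D0 H.
suff: forall i, (i < N)%N -> (p - r)`_i = 0.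
  by move=> H' i Hi; apply/eqP; rewrite -subr_eq0 -coefB H'.
have H0 : forall i, (i < N)%N -> (D * (p - r))`_i = 0.
  by move=> i Hi; rewrite mulrBr coefB H // subrr.
elim/ltn_ind => i IH Hi.
have := H0 i Hi; rewrite coefM big_ord_recl /= subn0 D0 mul1r.
rewrite big1 ?addr0 // => j _.
have := ltn_ord j => Hj.
rewrite /bump leq0n add1n IH ?mulr0 //; lia.
Qed.

Section Inv.
Variable f : fps C.
Hypothesis f0 : f 0%N != 0.

Lemma size_inv_seq m : size (inv_seq f m) = m.+1.
Proof. by elim: m => [|m IH] //=; rewrite size_rcons IH. Qed.

Lemma inv_seq_stable m i : (i <= m)%N -> nth 0 (inv_seq f m) i = fps_inv f i.
Proof.
elim: m => [|m IH] Hi.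
  by have -> : i = 0%N by lia.
have [->|Hne] := eqVneq i m.+1; first by [].
rewrite /= nth_rcons size_inv_seq ifT; last lia.
apply: IH; lia.
Qed.

Lemma fps_invS m : fps_inv f m.+1 =
  - (f 0%N)^-1 * \sum_(i < m.+1) f i.+1 * fps_inv f (m - i).
Proof.
rewrite {1}/fps_inv /= nth_rcons size_inv_seq ltnn eqxx.
congr (_ * _).
rewrite big_add1 /= big_mkord; apply: eq_bigr => i _.
have := ltn_ord i => Hi.
rewrite inv_seq_stable; last lia.
by rewrite subSS.
Qed.

Lemma mul_inv m : fps_mul f (fps_inv f) m = (m == 0%N)%:R.
Proof.
case: m => [|m].
  by rewrite /fps_mul big_ord1 /= /fps_inv /= mulfV.
rewrite /fps_mul big_ord_recl /= subn0 fps_invS.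
rewrite mulrA mulrN mulfV // mulN1r.
under [X in _ + X]eq_bigr => i _ do rewrite /bump /= add1n subSS.
by rewrite addNr.
Qed.
End Inv.

Lemma T_inv N p : p`_0 != 0 -> peq N (p * T N (fps_inv (fps_poly p))) 1.
Proof.
move=> p0.
apply: (peq_trans _ _ (T N (fps_poly p) * T N (fps_inv (fps_poly p)))).
  exact: peqM _ _ _ _ _ (peq_sym _ _ _ (T_poly N p)) (peq_refl _ _).
apply: peq_trans (peq_sym _ _ _ (T_mul _ _ _)) _.
by move=> i Hi; rewrite coefT Hi mul_inv // coef1.
Qed.

Lemma coef_dil c p i : (p \Po (c *: 'X))`_i = c ^+ i * p`_i.
Proof.
elim/poly_ind: p i => [|p d IH] i.
  by rewrite comp_poly0 !coef0 mulr0.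
rewrite comp_poly_MXaddC -scalerAr !coefD coefZ !coefMX !coefC.
case: i => [|i] /=; first by rewrite !mulr0 expr0 mul1r !add0r.
by rewrite IH !addr0 mulrA -exprS.
Qed.

Lemma peq_dil N c p r : peq N p r -> peq N (p \Po (c *: 'X)) (r \Po (c *: 'X)).
Proof. by move=> H i Hi; rewrite !coef_dil H. Qed.

End PEQ.

Section PS.
Context {C : fieldType}.
Variables a b q : C.

Definition Ap n : {poly C} := qpoch (a *: 'X) q%:P n.
Definition Dp n : {poly C} := qpoch (b *: 'X) q%:P n.
Definition phi n : fps C :=
  fps_mul (fps_poly ('X^n * Ap n)) (fps_inv (fps_poly (Dp n))).
Definition Ip N n := T N (fps_inv (fps_poly (Dp n))).
Definition Phi N n := T N (phi n).
Definition dl (p : {poly C}) := p \Po (q *: 'X).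

Lemma qpochS (R : pzRingType) (x r : R) n :
  qpoch x r n.+1 = (1 - x) * qpoch (x * r) r n.
Proof.
rewrite /qpoch big_ord_recl /= expr0 mulr1; congr (_ * _).
by apply: eq_bigr => j _; rewrite /bump /= add1n exprS mulrA.
Qed.

Lemma qpoch_coef0 c n : (qpoch (c *: 'X) q%:P n : {poly C})`_0 = 1.
Proof.
rewrite -horner_coef0 /qpoch horner_prod big1 // => j _.
by rewrite !hornerE subr0.
Qed.

Lemma qpoch_dil c n :
  dl (qpoch (c *: 'X) q%:P n) = qpoch ((c * q) *: 'X) q%:P n.
Proof.
rewrite /dl /qpoch rmorph_prod; apply: eq_bigr => j _.
rewrite rmorphB rmorph1 rmorphM rmorphXn /= comp_polyZ comp_polyX comp_polyC.
by congr (1 - _ * _); apply/polyP => i; rewrite !coefZ mulrA.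
Qed.

Lemma qpochS' c n :
  (qpoch (c *: 'X) q%:P n.+1 : {poly C}) = (1 - c%:P * 'X) * dl (qpoch (c *: 'X) q%:P n).
Proof.
rewrite qpochS qpoch_dil mul_polyC; congr (_ * qpoch _ _ _).
by apply/polyP => i; rewrite coefMC !coefZ mulrAC.
Qed.

Lemma Dp0 n : (Dp n)`_0 = 1. Proof. exact: qpoch_coef0. Qed.
Lemma Ap0 n : (Ap n)`_0 = 1. Proof. exact: qpoch_coef0. Qed.

Lemma PhiE N n : peq N (Phi N n) ('X^n * (Ap n * Ip N n)).
Proof.
apply: peq_trans (T_mul _ _ _) _; rewrite mulrA.
exact: peqM _ _ _ _ _ (T_poly _ _) (peq_refl _ _).
Qed.

Lemma DI N n : peq N (Dp n * Ip N n) 1.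
Proof. by apply: T_inv; rewrite Dp0 oner_neq0. Qed.

Lemma phi_low n i : (i < n)%N -> phi n i = 0.
Proof.
move=> Hi; have := PhiE i.+1 n i (ltnSn i).
by rewrite coefT ltnSn coefXnM Hi.
Qed.

Lemma phi_nn n : phi n n = 1.
Proof.
have := PhiE n.+1 n n (ltnSn n).
rewrite coefT ltnSn coefXnM ltnn subnn coefM big_ord1 /= Ap0 mul1r => ->.
by rewrite coefT /= /fps_inv /= /fps_poly Dp0 invr1.
Qed.

Lemma peq_eq N (p r : {poly C}) : p = r -> peq N p r.
Proof. by move=> ->. Qed.

Lemma REL N n :
  peq N ((1 - b%:P * 'X) * (q ^+ n)%:P * Phi N n.+1)
        ('X * (1 - a%:P * 'X) * dl (Phi N n)).
Proof.
apply: (peq_cancel N (dl (Dp n))).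
  by rewrite /dl coef_dil expr0 mul1r Dp0.
refine (peq_trans _ _ ((q ^+ n)%:P * 'X^(n.+1) * Ap n.+1) _ _ _).
  refine (peq_trans _ _ ((q ^+ n)%:P * (Dp n.+1 * Phi N n.+1)) _ _ _).
    by apply: peq_eq; rewrite /Dp qpochS'; ring.
  refine (peq_trans _ _ ((q ^+ n)%:P * (Dp n.+1 * ('X^(n.+1) * (Ap n.+1 * Ip N n.+1)))) _ _ _).
    exact: peqM _ _ _ _ _ (peq_refl _ _) (peqM _ _ _ _ _ (peq_refl _ _) (PhiE _ _)).
  refine (peq_trans _ _ ((q ^+ n)%:P * 'X^(n.+1) * Ap n.+1 * (Dp n.+1 * Ip N n.+1)) _ _ _).
    by apply: peq_eq; ring.
  rewrite -[X in peq _ _ X]mulr1.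
  exact: peqM _ _ _ _ _ (peq_refl _ _) (DI _ _).
apply: peq_sym.
refine (peq_trans _ _ ('X * (1 - a%:P * 'X) * dl (Dp n * Phi N n)) _ _ _).
  by apply: peq_eq; rewrite /dl comp_polyM; ring.
refine (peq_trans _ _ ('X * (1 - a%:P * 'X) * dl ('X^n * Ap n * (Dp n * Ip N n))) _ _ _).
  apply: peqM _ _ _ _ _ (peq_refl _ _) _; apply: peq_dil.
  refine (peq_trans _ _ (Dp n * ('X^n * (Ap n * Ip N n))) _ _ _).
    exact: peqM _ _ _ _ _ (peq_refl _ _) (PhiE _ _).
  by apply: peq_eq; ring.
refine (peq_trans _ _ ('X * (1 - a%:P * 'X) * dl ('X^n * Ap n * 1)) _ _ _).
  apply: peqM _ _ _ _ _ (peq_refl _ _) _; apply: peq_dil.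
  exact: peqM _ _ _ _ _ (peq_refl _ _) (DI _ _).
apply: peq_eq; rewrite mulr1 /dl comp_polyM rmorphXn /= comp_polyX.
rewrite /Ap qpochS' /dl -mul_polyC exprZn -[_ *: 'X^n]mul_polyC exprS; ring.
Qed.

End PS.
Section BS.
Context {C : fieldType}.
Variables (a b q : C) (B : nat -> nat -> C).
Hypothesis hq : q != 0.
Hypothesis HB : B_expansion a b q B.

Definition be n k := Gk B k n.
Local Notation Phi := (Phi a b q).
Local Notation phi := (phi a b q).

Lemma HX N k : peq N ('X^k) (\sum_(n < N) (be n k)%:P * Phi N n).
Proof.
move=> i Hi.
have E := f_equal (fun f => f i) (HB k).
rewrite -[LHS]/(fps_poly ('X^k) i) E.
rewrite /fps_vsum coef_sum.
have -> : \sum_(n < i.+1) (if (k <= n)%N then fps_scale (B n k)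
       (fps_mul (fps_poly ('X^n * qpoch (a *: 'X) q%:P n))
          (fps_inv (fps_poly (qpoch (b *: 'X) q%:P n)))) else fps0 C) i
   = \sum_(n < i.+1) be n k * phi n i.
  apply: eq_bigr => n _; rewrite /be /Gk.
  by case: (k <= n)%N => //; rewrite /fps0 mul0r.
rewrite (big_ord_widen N (fun n => be n k * phi n i)) //.
rewrite big_mkcond /=; apply: eq_bigr => n _.
rewrite coefCM coefT Hi.
case: ifP => // Hn.
rewrite phi_low ?mulr0 //; lia.
Qed.

Lemma UX N (c : nat -> C) :
  peq N (\sum_(n < N) (c n)%:P * Phi N n) 0 -> forall n, (n < N)%N -> c n = 0.
Proof.
move=> H; elim/ltn_ind => n IH Hn.
have := H n Hn; rewrite coef0 coef_sum (bigD1 (Ordinal Hn)) //=.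
rewrite coefCM /Phi coefT Hn phi_nn mulr1 big1 ?addr0 // => j Hj.
rewrite coefCM coefT Hn.
have Hj' : (nat_of_ord j != n) by apply: contra Hj => /eqP Hj; apply/eqP/val_inj.
have [Hlt|Hgt] := ltnP j n.
  by rewrite IH ?mul0r //; apply: (ltn_trans Hlt).
rewrite phi_low ?mulr0 //; lia.
Qed.

Lemma Phi_top N : peq N (Phi N N) 0.
Proof. by move=> i Hi; rewrite coefT Hi phi_low // coef0. Qed.

Lemma H1 m : be m 0 = (m == 0)%N%:R.
Proof.
apply/eqP; rewrite -subr_eq0; apply/eqP.
apply: (UX m.+1 (fun n => be n 0 - (n == 0)%N%:R)) => //.
move=> i Hi.
have E : \sum_(n < m.+1) (be n 0 - (nat_of_ord n == 0)%N%:R)%:P * Phi m.+1 n =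
  \sum_(n < m.+1) (be n 0)%:P * Phi m.+1 n - Phi m.+1 0.
  rewrite big_ord_recl [X in _ = X - _]big_ord_recl /=.
  under eq_bigr => j _ do rewrite subr0.
  by rewrite rmorphB /= polyC1; ring.
rewrite E coefB -(HX m.+1 0 i Hi) coef0.
have P0 : peq m.+1 (Phi m.+1 0) 1.
  apply: peq_trans (PhiE _ _ _ _ _) _.
  rewrite expr0 mul1r /Ap /qpoch big_ord0 mul1r.
  have := DI b q m.+1 0; rewrite /Dp /qpoch big_ord0 mul1r; exact.
by rewrite P0 // subrr.
Qed.

End BS.
Section BS2.
Context {C : fieldType}.
Variables (a b q : C) (B : nat -> nat -> C).
Hypothesis hq : q != 0.
Hypothesis HB : B_expansion a b q B.
Local Notation Phi := (Phi a b q).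
Local Notation be := (be B).

Definition U N j := \sum_(n < N) (be n j * q ^+ n)%:P * Phi N n.+1.

Lemma U_eq N j : peq N ((1 - b%:P * 'X) * U N j)
   ('X * (1 - a%:P * 'X) * ((q ^+ j)%:P * 'X^j)).
Proof.
refine (peq_trans _ _ (\sum_(n<N) (be n j)%:P * ((1 - b%:P*'X) * (q^+n)%:P * Phi N n.+1)) _ _ _).
  apply: peq_eq; rewrite /U mulr_sumr; apply: eq_bigr => n _; rewrite rmorphM /=; ring.
refine (peq_trans _ _ (\sum_(n<N) (be n j)%:P * ('X * (1 - a%:P * 'X) * dl q (Phi N n))) _ _ _).
  apply: peq_sum => n; exact: peqM _ _ _ _ _ (peq_refl _ _) (REL _ _ _ _ _).
refine (peq_trans _ _ ('X * (1 - a%:P * 'X) * dl q (\sum_(n<N) (be n j)%:P * Phi N n)) _ _ _).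
  apply: peq_eq; rewrite /dl rmorph_sum mulr_sumr; apply: eq_bigr => n _.
  rewrite rmorphM /= comp_polyC; ring.
refine (peq_trans _ _ ('X * (1 - a%:P * 'X) * dl q ('X^j)) _ _ _).
  apply: peqM _ _ _ _ _ (peq_refl _ _) _; apply: peq_dil; apply: peq_sym; exact: HX.
by apply: peq_eq; rewrite /dl rmorphXn /= comp_polyX exprZn -[q ^+ j *: _]mul_polyC.
Qed.

Lemma D0 : (1 - b%:P * 'X : {poly C})`_0 = 1.
Proof. by rewrite coefB coef1 coefCM coefX /= mulr0 subr0. Qed.

Lemma H2 m k : q^+k.+1 * be m.+1 k.+1 - a * q^+k.+1 * be m.+1 k.+2
             = q^+m.+1 * be m k - b * q^+m * be m k.+1.
Proof.
set N := m.+2.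
pose gam n := q * be n k * q^+n - b * be n k.+1 * q^+n.
pose del n := if n is n'.+1 then gam n' else 0.
pose c n := q^+k.+1 * be n k.+1 - a * q^+k.+1 * be n k.+2 - del n.
suff Z : peq N (\sum_(n < N) (c n)%:P * Phi N n) 0.
  have := UX a b q hq N c Z m.+1 (ltnSn _).
  rewrite /c /del /gam => /eqP; rewrite subr_eq0 => /eqP ->; rewrite exprS; ring.
pose V := q%:P * U N k - b%:P * U N k.+1.
have V1 : peq N V ((q^+k.+1)%:P * ('X^(k.+1) - a%:P * 'X^(k.+2))).
  apply: (peq_cancel N (1 - b%:P * 'X)); first exact: D0.
  refine (peq_trans _ _ (q%:P * ((1 - b%:P * 'X) * U N k)
                       - b%:P * ((1 - b%:P * 'X) * U N k.+1)) _ _ _).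
    by apply: peq_eq; rewrite /V; ring.
  refine (peq_trans _ _ (q%:P * ('X * (1 - a%:P * 'X) * ((q ^+ k)%:P * 'X^k))
     - b%:P * ('X * (1 - a%:P * 'X) * ((q ^+ k.+1)%:P * 'X^(k.+1)))) _ _ _).
    apply: peqB; apply: peqM _ _ _ _ _ (peq_refl _ _) _; exact: U_eq.
  by apply: peq_eq; rewrite !exprS !rmorphM /=; ring.
have V2 : V = \sum_(n < N) (gam n)%:P * Phi N n.+1.
  rewrite /V /U !mulr_sumr -sumrB; apply: eq_bigr => n _.
  by rewrite /gam !rmorphB !rmorphM /=; ring.
have V3 : peq N (\sum_(n < N) (gam n)%:P * Phi N n.+1)
                (\sum_(n < N) (del n)%:P * Phi N n).
  have E : \sum_(n < N) (gam n)%:P * Phi N n.+1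
         = \sum_(n < N.+1) (del n)%:P * Phi N n.
    rewrite [RHS]big_ord_recl /= polyC0 mul0r add0r.
    by apply: eq_bigr => i _; rewrite /bump /= add1n.
  rewrite E big_ord_recr /=.
  rewrite -[X in peq _ _ X]addr0; apply: peqD; first exact: peq_refl.
  rewrite -(mulr0 (del N)%:P); apply: peqM; first exact: peq_refl.
  exact: Phi_top.
have E : \sum_(n < N) (c n)%:P * Phi N n =
   (q^+k.+1)%:P * \sum_(n < N) (be n k.+1)%:P * Phi N n
   - (a * q^+k.+1)%:P * \sum_(n < N) (be n k.+2)%:P * Phi N n
   - \sum_(n < N) (del n)%:P * Phi N n.
  rewrite !mulr_sumr -!sumrB; apply: eq_bigr => n _.
  by rewrite /c !rmorphB !rmorphM /=; ring.
rewrite E.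
refine (peq_trans _ _ ((q^+k.+1)%:P * 'X^(k.+1) - (a * q^+k.+1)%:P * 'X^(k.+2) - V) _ _ _).
  apply: peqB; last by rewrite V2; exact: peq_sym.
  apply: peqB; apply: peqM _ _ _ _ _ (peq_refl _ _) _; apply: peq_sym; exact: HX.
rewrite -(subrr V); apply: peqB; last exact: peq_refl.
apply: peq_trans _ _ _ _ _ (peq_sym _ _ _ V1).
by apply: peq_eq; rewrite rmorphM /=; ring.
Qed.

End BS2.
Section FL.
Context {F : fieldType}.
Variables (a b q : F) (be : nat -> nat -> F).
Hypothesis hq : q != 0.
Hypothesis H0 : forall m, be m 0 = (m == 0)%N%:R.
Hypothesis Hz : forall m k, (m < k)%N -> be m k = 0.
Hypothesis Hr : forall m k, q^+k.+1 * be m.+1 k.+1 - a * q^+k.+1 * be m.+1 k.+2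
             = q^+m.+1 * be m k - b * q^+m * be m k.+1.

Definition Lf m Y := \sum_(k < m.+1) be m k * Y ^+ k.
Definition Pf n Y := qpoch (b / Y) q n / qpoch (a / Y) q n.
Definition Qf n Y := qpoch (b / Y) q n / qpoch (a / Y) q n.+1.
Definition Sf n j := (if j == 1%N then b * q ^+ n else 0) - a * ((q ^+ n) ^+ j * be j 1).
Definition Rf m Y := Pf m Y * Y ^+ m + \sum_(n < m.+1) Qf n Y * Y ^+ n * Sf n (m - n)%N.

Lemma qpoch_shift x n Y : qpoch (x / Y) q n.+1 = (1 - x / Y) * qpoch (x / (Y / q)) q n.
Proof. by rewrite qpochS invfM invrK mulrA. Qed.

Lemma divMM (x y z w : F) : (x * y) / (z * w) = x / z * (y / w).
Proof. by rewrite invfM mulrACA. Qed.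

Lemma Pf_shift n Y : Pf n.+1 Y = (1 - b / Y) / (1 - a / Y) * Pf n (Y / q).
Proof. by rewrite /Pf !qpoch_shift divMM. Qed.

Lemma Qf_shift n Y : Qf n.+1 Y = (1 - b / Y) / (1 - a / Y) * Qf n (Y / q).
Proof. by rewrite /Qf !qpoch_shift divMM. Qed.

Lemma Sf_shift n j : Sf n.+1 j = q ^+ j * Sf n j.
Proof.
rewrite /Sf exprS exprMn; case: eqP => [->|_]; rewrite ?expr1.
  move: (q ^+ n) => u; ring.
move: (q ^+ n) (q ^+ j) => u v; ring.
Qed.

Lemma Ydiv Y n : Y ^+ n = q ^+ n * (Y / q) ^+ n.
Proof.
rewrite expr_div_n mulrC divfK //; exact: expf_neq0.
Qed.

Lemma Rrec m Y : Y != 0 -> Y - a != 0 ->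
  (Y - a) * Rf m.+1 Y = Y * ((m == 0)%N%:R * b - a * be m.+1 1)
                       + (Y - b) * Y * q ^+ m * Rf m (Y / q).
Proof.
move=> HY HYa.
have Ha : 1 - a / Y != 0.
  have -> : 1 - a / Y = (Y - a) / Y by field.
  by rewrite mulf_neq0 // invr_eq0.
set K := (1 - b / Y) / (1 - a / Y) * Y * q ^+ m.
have Rs : Rf m.+1 Y = Qf 0 Y * Sf 0 m.+1 + K * Rf m (Y / q).
  rewrite /Rf big_ord_recl /= subn0 expr0 mulr1 mulrDr addrCA; congr (_ + _).
  rewrite mulrDr mulr_sumr Pf_shift exprS (Ydiv Y m); congr (_ + _).
    by rewrite /K; ring.
  apply: eq_bigr => i _; rewrite /bump /= add1n subSS Qf_shift Sf_shift exprS (Ydiv Y i) /K.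
  have -> : q ^+ m = q ^+ i * q ^+ (m - i).
    by rewrite -exprD subnKC //; have := ltn_ord i; lia.
  ring.
rewrite Rs /Qf /Sf /qpoch big_ord0 big_ord1 expr0 mulr1 expr1n mul1r.
rewrite (_ : (m.+1 == 1)%N = (m == 0)%N) //.
rewrite /K mulr1; clear Rs K.
have -> : (if (m == 0)%N then b else 0) = (m == 0)%N%:R * b.
  by case: (m == 0)%N; rewrite ?mul1r ?mul0r.
move: (q ^+ m) (Rf m (Y / q)) ((m == 0)%N%:R) (be m.+1 1) => u v w z.
have E : 1 - a / Y = (Y - a) / Y by field.
rewrite E; field; by rewrite HYa HY.
Qed.

Lemma Lrec m Y : Y != 0 ->
  (Y - a) * Lf m.+1 Y = Y * ((m == 0)%N%:R * b - a * be m.+1 1)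
                       + (Y - b) * Y * q ^+ m * Lf m (Y / q).
Proof.
move=> HY.
have S1 : \sum_(k < m.+2) be m.+1 k.+1 * Y ^+ k.+1 = Lf m.+1 Y.
  transitivity (\sum_(k < m.+3) be m.+1 k * Y ^+ k).
    rewrite [RHS]big_ord_recl /= H0 /= mul0r add0r.
    by apply: eq_bigr => i _; rewrite /bump /= add1n.
  by rewrite big_ord_recr /= Hz ?mul0r ?addr0.
have A : (Y - a) * Lf m.+1 Y =
    \sum_(k < m.+2) Y ^+ k.+1 * (be m.+1 k - a * be m.+1 k.+1).
  have -> : \sum_(k < m.+2) Y ^+ k.+1 * (be m.+1 k - a * be m.+1 k.+1)
      = Y * Lf m.+1 Y - a * \sum_(k < m.+2) be m.+1 k.+1 * Y ^+ k.+1.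
    rewrite /Lf !mulr_sumr -sumrB; apply: eq_bigr => k _; rewrite exprS; ring.
  by rewrite S1 mulrBl.
have Hr' k : be m.+1 k.+1 - a * be m.+1 k.+2
    = (q^+m.+1 * be m k - b * q^+m * be m k.+1) / q^+k.+1.
  rewrite -Hr; have hk := expf_neq0 k.+1 hq.
  move: (q ^+ k.+1) hk => u hu; by field.
set S2 := \sum_(k < m.+1) Y ^+ 2 * q ^+ m * be m k * (Y / q) ^+ k.
set S3 := \sum_(k < m) b * Y * q ^+ m * be m k.+1 * (Y / q) ^+ k.+1.
have L1 : (Y - a) * Lf m.+1 Y = Y * (be m.+1 0 - a * be m.+1 1) + S2 - S3.
  rewrite A big_ord_recl /= expr1 -addrA; congr (_ + _).
  have -> : S3 = \sum_(k < m.+1) b * Y * q ^+ m * be m k.+1 * (Y / q) ^+ k.+1.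
    by rewrite big_ord_recr /= Hz ?mulr0 ?mul0r ?addr0.
  rewrite /S2 -sumrB; apply: eq_bigr => k _.
  rewrite /bump /= add1n Hr' !expr_div_n !exprS.
  have hk : q ^+ k != 0 by exact: expf_neq0.
  move: (q ^+ k) (Y ^+ k) (q ^+ m) (be m k) (be m k.+1) hk => u v w x y hu.
  by field; rewrite hu hq.
have L2 : (Y - b) * Y * q ^+ m * Lf m (Y / q)
          = S2 - (b * Y * q ^+ m * be m 0 + S3).
  rewrite /Lf mulr_sumr.
  rewrite (eq_bigr (fun k : 'I_m.+1 => Y ^+ 2 * q ^+ m * be m k * (Y / q) ^+ k
            - b * Y * q ^+ m * be m k * (Y / q) ^+ k)); last first.
    by move=> k _; rewrite expr2; ring.
  rewrite sumrB /S2; congr (_ - _).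
  by rewrite big_ord_recl /= expr0 mulr1.
rewrite L1 L2 H0 /= H0.
have -> : b * Y * q ^+ m * (m == 0)%N%:R = b * Y * (m == 0)%N%:R.
  by case: m {S2 S3 L1 L2 A S1 Hr'} => [|m]; rewrite ?expr0 ?mulr1 ?mulr0.
ring.
Qed.

Lemma LR m Y : Y != 0 -> (forall j, Y != a * q ^+ j) -> Lf m Y = Rf m Y.
Proof.
elim: m Y => [|m IH] Y HY HYj.
  rewrite /Lf /Rf !big_ord1 /= H0 /Pf /Qf /Sf /qpoch !big_ord0 /= Hz //.
  by rewrite !expr0 !mulr1 !mulr0 subrr mulr0 addr0 divr1.
have HYa : Y - a != 0.
  by rewrite subr_eq0; have := HYj 0%N; rewrite expr0 mulr1.
apply: (mulfI HYa); rewrite Lrec // Rrec // IH //.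
  by rewrite mulf_neq0 // invr_eq0.
move=> j; apply: contra (HYj j.+1) => /eqP E.
by rewrite exprS mulrCA -E mulrC divfK.
Qed.

End FL.
Section Final.
Context {C : fieldType}.

Lemma cstM (x y : C) : cst (x * y) = cst x * cst y.
Proof. by rewrite /cst polyCM tofracM. Qed.
Lemma cstB (x y : C) : cst (x - y) = cst x - cst y.
Proof. by rewrite /cst polyCB tofracB. Qed.
Lemma cstX (x : C) n : cst (x ^+ n) = cst x ^+ n.
Proof. by rewrite /cst rmorphXn tofracXn. Qed.
Lemma cst0 : cst (0 : C) = 0.
Proof. by rewrite /cst tofrac0. Qed.
Lemma cst_nat n : cst (n%:R : C) = n%:R.
Proof. by rewrite /cst rmorph_nat tofracMn tofrac1. Qed.
Lemma cst_neq0 (x : C) : x != 0 -> cst x != 0.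
Proof. by move=> Hx; rewrite /cst tofrac_eq0 polyC_eq0. Qed.
Lemma yv_neq_cst (x : C) : yv C != cst x.
Proof.
rewrite /yv /cst tofrac_eq; apply/eqP => E.
have := congr1 (fun p : {poly C} => p`_1) E; rewrite /= coefX coefC /=.
by move/eqP; rewrite oner_eq0.
Qed.
Lemma yv_neq0 : yv C != 0.
Proof. by rewrite -cst0; exact: yv_neq_cst. Qed.

End Final.

Theorem lemma2p2 (R : realType) (a b q : R[i]) (B : nat -> nat -> R[i]) :
  q != 0 ->
  B_expansion a b q B ->
  forall m : nat, Gyz B m = G_rhs a b q B m.
Proof.
move=> hq HB m.
pose be' := fun n k => cst (be B n k).
have hq' : cst q != 0 by exact: cst_neq0.
have H0' : forall n, be' n 0%N = (n == 0)%N%:R.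
  by move=> n; rewrite /be' (H1 a b q B hq HB) cst_nat.
have Hz' : forall n k, (n < k)%N -> be' n k = 0.
  move=> n k Hnk; rewrite /be' /be /Gk ifN ?cst0 //; lia.
have Hr' : forall n k, cst q ^+ k.+1 * be' n.+1 k.+1 - cst a * cst q ^+ k.+1 * be' n.+1 k.+2
        = cst q ^+ n.+1 * be' n k - cst b * cst q ^+ n * be' n k.+1.
  move=> n k; have := congr1 (@cst _) (H2 a b q B hq HB n k).
  by rewrite /be' !cstB !cstM !cstX.
have HY : yv R[i] != 0 by exact: yv_neq0.
have HYj : forall j, yv R[i] != cst a * cst q ^+ j.
  by move=> j; rewrite -cstX -cstM; exact: yv_neq_cst.
have := LR (cst a) (cst b) (cst q) be' hq' H0' Hz' Hr' m (yv R[i]) HY HYj.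
have -> : Gyz B m = Lf be' m (yv R[i]) by [].
move=> ->; rewrite /Rf /G_rhs /fps_add /fps_vsum.
congr (_ + _).
  rewrite big_ord_recr /= /fps_monom eqxx big1 ?add0r // => i _.
  by rewrite ifN // neq_ltn ltn_ord orbT.
apply: eq_bigr => n _; have Hn := ltn_ord n.
have Hmn : (m - n < m.+1)%N by lia.
rewrite /fps_mul (bigD1 (Ordinal Hmn)) //=.
rewrite big1 ?addr0; last first.
  move=> j Hj; rewrite /fps_monom ifN ?mulr0 //.
  apply: contra Hj => /eqP E; apply/eqP/val_inj => /=; have := ltn_ord j; lia.
rewrite /fps_monom subKn; last lia.
rewrite eqxx /Qf /Sf /fps_sub /fps_scale /fps_map /fps_dil /be' /be.
rewrite cstM !cstX mulrC; congr (_ * _).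
Qed.
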